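(* Let $G=(V,E)$ be a DAG with $n=|V|$ nodes that is $(e,d)$-reducible. Then $\Pi^{BW}_{cc}(G)\le\frac{e(e+1)}{2}+dn$. In particular, for every constant $\Delta$ there is a constant $C$ such that every DAG $G$ on $n\ge 3$ nodes with maximum indegree at most $\Delta$ satisfies $\Pi^{BW}_{cc}(G)\le C\left(\frac{n\log\log n}{\log n}\right)^2$.
   Context: For a DAG $G$, $\mathsf{depth}(G)$ is the number of nodes on a longest directed path; $G-S$ is $G$ with the nodes of $S$ and incident edges removed. $G$ is $(e,d)$-reducible if there is $S\subseteq V$ with $|S|\le e$ and $\mathsf{depth}(G-S)\le d$. A parallel-black sequential-white pebbling of $G=(V,E)$ is a sequence $P=(P_0,\ldots,P_t)$ of pairs $P_i=(P_i^B,P_i^W)$ of subsets of $V$ such that: $P_0=(\emptyset,\emptyset)$; $P_t^W=\emptyset$; $|P_i^W\setminus P_{i-1}^W|\le1$ for all $i\in[t]$; for all $i\in[t]$, if $x\in P_{i-1}^W\setminus P_i^W$ then $\mathsf{parents}(x)\subseteq P_{i-1}^W\cup P_{i-1}^B$; for all $i\in[t]$, if $x\in P_i^B\setminus P_{i-1}^B$ then $\mathsf{parents}(x)\subseteq P_{i-1}^W\cup P_{i-1}^B$; and every sink $x$ of $G$ lies in $P_z^W\cup P_z^B$ for some $z\le t$. $\Pi^{BW}_{cc}(G)=\min_P\sum_{i=1}^t|P_i^B\cup P_i^W|$ over all such pebblings. *)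

(* Defs.v *)
From Stdlib Require Import Reals.
From mathcomp Require Import all_boot.
Set Implicit Arguments. Unset Strict Implicit. Unset Printing Implicit Defensive.

Definition dag (V : finType) (E : rel V) : Prop :=
  forall (x : V) (p : seq V), path E x p -> x \notin p.

Definition parents (V : finType) (E : rel V) (v : V) : {set V} :=
  [set u | E u v].

Definition is_sink (V : finType) (E : rel V) (v : V) : bool :=
  [forall w, ~~ E v w].

(* depth(G - S) <= d : every directed path of G all of whose nodes avoid S
   has at most d nodes. *)
Definition depth_minus_le (V : finType) (E : rel V) (S : {set V}) (d : nat) : Prop :=
  forall (x : V) (p : seq V), path E x p -> all (fun v => v \notin S) (x :: p) ->
    size (x :: p) <= d.

Definition reducible (V : finType) (E : rel V) (e d : nat) : Prop :=
  exists S : {set V}, #|S| <= e /\ depth_minus_le E S d.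

(* A parallel-black sequential-white pebbling P = (P_0,...,P_t), given by
   the length t and the maps i |-> P_i^B, i |-> P_i^W. *)
Definition bw_pebbling (V : finType) (E : rel V) (t : nat)
    (PB PW : nat -> {set V}) : Prop :=
  [/\ PB 0 = set0 /\ PW 0 = set0 /\ PW t = set0,
      (forall i, 1 <= i <= t -> #|PW i :\: PW i.-1| <= 1),
      (forall i, 1 <= i <= t -> forall x, x \in PW i.-1 :\: PW i ->
          parents E x \subset PW i.-1 :|: PB i.-1),
      (forall i, 1 <= i <= t -> forall x, x \in PB i :\: PB i.-1 ->
          parents E x \subset PW i.-1 :|: PB i.-1)
    & (forall x, is_sink E x -> exists z, z <= t /\ x \in PW z :|: PB z)].

Definition bw_cost (V : finType) (t : nat) (PB PW : nat -> {set V}) : nat :=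
  \sum_(1 <= i < t.+1) #|PB i :|: PW i|.

(* Pi^BW_cc(G) <= b  (Pi^BW_cc is a minimum over pebblings, which always
   exist, so this is exactly "some pebbling has cost <= b"). *)
Definition ccBW_le (V : finType) (E : rel V) (b : nat) : Prop :=
  exists t PB PW, @bw_pebbling V E t PB PW /\ bw_cost t PB PW <= b.

Definition ccBW_leR (V : finType) (E : rel V) (b : R) : Prop :=
  exists t PB PW, @bw_pebbling V E t PB PW /\ Rle (INR (bw_cost t PB PW)) b.

(* Main.v *)
Require Import Defs.
From Stdlib Require Import Reals Lra Psatz.
From mathcomp Require Import all_boot.
From mathcomp Require Import zify.
Set Implicit Arguments. Unset Strict Implicit. Unset Printing Implicit Defensive.

Section Part1.
Variables (V : finType) (E : rel V) (S : {set V}).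

Definition Fst (X : {set V}) : {set V} :=
  [set v | (v \notin S) && (parents E v \subset S :|: X)].
Definition Bst j := iter j Fst set0.

Lemma Bst_path j v : v \notin S -> v \notin Bst j ->
  exists x p, [/\ path E x p, all (fun w => w \notin S) (x :: p), last x p = v & j < size (x :: p)].
Proof.
elim: j v => [|j IH] v vS vB.
  by exists v, [::]; rewrite /= vS.
have : ~~ (parents E v \subset S :|: Bst j).
  by move: vB; rewrite /Bst /= inE vS /=.
case/subsetPn=> u; rewrite inE => Euv; rewrite inE negb_or => /andP[uS uB].
have [x [p [Hp Ha Hl Hs]]] := IH u uS uB.
exists x, (rcons p v); split.
- by rewrite rcons_path Hp Hl /=.
- by rewrite -rcons_cons all_rcons Ha vS.
- by rewrite last_rcons.
- by rewrite /= size_rcons; move: Hs => /= Hs; lia.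
Qed.

Lemma Bst_full d : depth_minus_le E S d -> forall v, v \notin S -> v \in Bst d.
Proof.
move=> Hd v vS; apply/negPn/negP => vB.
have [x [p [Hp Ha _ Hs]]] := Bst_path vS vB.
by have := Hd x p Hp Ha; rewrite leqNgt Hs.
Qed.

Lemma sum_tri k : \sum_(1 <= i < k.+1) i = (k * (k + 1)) %/ 2.
Proof.
have -> : \sum_(1 <= i < k.+1) i = \sum_(0 <= i < k.+1) i.
  by rewrite [in RHS]big_ltn.
by rewrite bin2_sum bin2 divn2 mulnC addn1.
Qed.

Lemma part1 e d : #|S| <= e -> depth_minus_le E S d ->
  ccBW_le E ((e * (e + 1)) %/ 2 + d * #|V|).
Proof.
move=> Se Hd.
set s := enum S; set k := #|S|.
have sk : size s = k by rewrite /s -cardE.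
have Sfull : forall v, v \in S :|: Bst d by move=> v; rewrite inE; case: (boolP (v \in S)) => //= /(Bst_full Hd).
pose PW i := if i <= k + d then [set x in take i s] else set0.
pose PB i := if i <= k + d then Bst (i - k) else set0.
have takeS : forall i, k <= i -> [set x in take i s] = S.
  by move=> i ki; apply/setP => x; rewrite inE take_oversize ?sk // /s mem_enum.
have takeP : forall i x, x \in take i.-1 s -> x \in take i s.
  by move=> i x; rewrite -(take_takel s (leq_pred i)) => /mem_take.
exists (k + d).+1, PB, PW; split; last first.
  rewrite /bw_cost big_nat_recr //= {2}/PB {2}/PW ltnn setU0 cards0 addn0.
  rewrite (@big_cat_nat _ _ _ k.+1) //=; last by lia.
  apply: leq_add.
    apply: (leq_trans (_ : _ <= \sum_(1 <= i < k.+1) i)).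
      rewrite big_nat_cond [X in _ <= X]big_nat_cond; apply: leq_sum => i /andP[/andP[i1 ik] _].
      rewrite /PB /PW ifT; last by lia.
      rewrite ifT; last by lia.
      rewrite (_ : i - k = 0); last by lia.
      rewrite set0U cardsE; apply: (leq_trans (card_size _)).
      by rewrite size_take; case: ltnP.
    rewrite sum_tri; apply: leq_div2r; apply: leq_mul => //; lia.
  apply: (leq_trans (_ : _ <= \sum_(k.+1 <= i < (k + d).+1) #|V|)).
    by apply: leq_sum => i _; apply: max_card.
  by rewrite sum_nat_const_nat; apply: leq_mul => //; lia.
split.
- split; first by rewrite /PB /=.
  split; first by rewrite /PW /= take0; apply/setP => x; rewrite !inE.
  by rewrite /PW ltnn.
- move=> [//|i] /andP[_ it]; rewrite /PW /=.
  case: ifP => ik; last by rewrite set0D cards0.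
  rewrite ifT; last by lia.
  apply: (leq_trans _ (_ : size (drop i (take i.+1 s)) <= 1)); last first.
    by rewrite size_drop size_take; case: ifP => H /=; lia.
  apply: (leq_trans _ (card_size _)); apply: subset_leq_card; apply/subsetP => x.
  rewrite !inE => /andP[nx xi]; rewrite -(cat_take_drop i (take i.+1 s)) take_takel // mem_cat in xi.
  by move: xi; rewrite (negbTE nx).
- move=> [//|i] /andP[_ it] x; rewrite /PW inE /=.
  case: ifP => ik.
    rewrite ifT ?inE; last by lia.
    have takeP' := takeP i.+1 x; rewrite /= in takeP'.
    by move=> /andP[/negP nx /takeP'].
  have -> : i = (k + d) by lia.
  rewrite /= leqnn takeS ?leq_addr // => _; rewrite /PB leqnn addKn.
  by apply/subsetP => y _; apply: Sfull.
- move=> [//|i] /andP[_ it] x; rewrite /PB inE /=.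
  case: (ltnP i (k + d)) => ik; last by rewrite inE andbF.
  rewrite ifT; last by lia.
  case: (leqP i k) => ki.
    case: (ltnP i k) => ki'.
      by rewrite (_ : i.+1 - k = 0) ?inE ?andbF //; lia.
    have -> : i = k by lia.
    rewrite subnn subSnn /Bst /= => /andP[_ H]; move: H; rewrite inE => /andP[_ sub].
    by rewrite /PW ifT ?takeS //; lia.
  have -> : i.+1 - k = (i - k).+1 by lia.
  rewrite /Bst /= => /andP[_ H]; move: H; rewrite inE => /andP[_ sub].
  by rewrite /PW ifT ?takeS //; lia.
- move=> x _; exists (k + d); split => //.
  by rewrite /PW /PB leqnn addKn takeS ?leq_addr.
Qed.
End Part1.
Fixpoint hbf (f a b : nat) : nat :=
  if f is f'.+1 then (if a./2 == b./2 then 0 else (hbf f' a./2 b./2).+1) else 0.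

Lemma hbf_max f a b c : a <= b -> b <= c -> hbf f a c = maxn (hbf f a b) (hbf f b c).
Proof.
elim: f a b c => [|f IH] a b c ab bc //=.
have h1 := half_leq ab; have h2 := half_leq bc.
case: eqP => [Eac|Nac].
  have Eab : a./2 = b./2 by lia.
  have Ebc : b./2 = c./2 by lia.
  by rewrite Eab Ebc eqxx.
case: eqP => [Eab|Nab]; case: eqP => [Ebc|Nbc].
- by exfalso; apply: Nac; rewrite Eab Ebc.
- by rewrite Eab max0n.
- by rewrite -Ebc maxn0.
- by rewrite (IH a./2 b./2 c./2) // maxnSS.
Qed.

Lemma hbf_bit f a b : a < 2 ^ f -> b < 2 ^ f -> a != b ->
  odd (a %/ 2 ^ (hbf f a b)) != odd (b %/ 2 ^ (hbf f a b)).
Proof.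
elim: f a b => [|f IH] a b ha hb nab /=.
  by move: ha hb nab; rewrite expn0; case: a => //; case: b.
case: (a./2 =P b./2) => [E|N].
  rewrite expn0 !divn1; apply/negP => /eqP Eo; move/eqP: nab; apply.
  by rewrite -[a]odd_double_half -[b]odd_double_half E Eo.
rewrite expnS !divnMA !divn2.
apply: IH; [| |by apply/eqP].
  by rewrite -divn2 ltn_divLR // mulnC -expnS.
by rewrite -divn2 ltn_divLR // mulnC -expnS.
Qed.

Lemma hbf_lt f a b : a < 2 ^ f -> b < 2 ^ f -> a != b -> hbf f a b < f.
Proof.
elim: f a b => [|f IH] a b ha hb nab /=.
  by move: ha hb nab; rewrite expn0; case: a => //; case: b.
case: eqP => // N.
rewrite ltnS; apply: IH; [| |by apply/eqP].
  by rewrite -divn2 ltn_divLR // mulnC -expnS.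
by rewrite -divn2 ltn_divLR // mulnC -expnS.
Qed.

Section Graph.
Variables (V : finType) (E : rel V).
Hypothesis dagE : dag E.

Lemma nocycle u v : connect E v u -> E u v -> False.
Proof.
case/connectP => p pth lst Euv.
have := dagE (x := v) (p := rcons p v).
rewrite rcons_path pth -lst Euv mem_rcons inE eqxx /=.
by move/(_ isT).
Qed.

Definition anc v := [set u | (u != v) && connect E u v].
Definition lab v := #|anc v|.

Lemma lab_lt u v : E u v -> lab u < lab v.
Proof.
move=> Euv; apply: proper_card; apply/properP; split.
  apply/subsetP => w; rewrite !inE => /andP[wu cwu].
  apply/andP; split; last by apply: connect_trans cwu (connect1 Euv).
  by apply/eqP => wv; subst w; apply: (nocycle cwu Euv).
exists u; last by rewrite inE eqxx.
rewrite inE connect1 // andbT; apply/eqP => uv; subst u.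
by apply: (nocycle (connect0 _ v) Euv).
Qed.

Lemma lab_bound v : lab v < #|V|.
Proof.
rewrite -cardsT; apply: proper_card; apply/properP; split; first exact: subsetT.
by exists v; rewrite ?inE ?eqxx.
Qed.

Section Depth.
Variables (r : nat) (A : {set 'I_r}) (S : {set V}).
Hypothesis labr : forall v, lab v < 2 ^ r.
Definition goodh h := [exists i in A, val i == h].
Hypothesis goodE : forall u v, E u v -> v \notin S -> goodh (hbf r (lab u) (lab v)).

Lemma path_good x p : path E x p -> all (fun w => w \notin S) p ->
  forall y, y \in p -> lab x < lab y /\ goodh (hbf r (lab x) (lab y)).
Proof.
elim: p x => [|z p IH] x //= /andP[Exz pz] /andP[zS aS] y.
rewrite inE => /orP[/eqP -> |yp]; first by split; [apply: lab_lt | apply: goodE].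
have [lzy gzy] := IH z pz aS y yp.
have lxz := lab_lt Exz.
split; first by apply: ltn_trans lzy.
rewrite (@hbf_max r _ _ _ (ltnW lxz) (ltnW lzy)).
by case: (leqP (hbf r (lab x) (lab z)) (hbf r (lab z) (lab y))) => h //; apply: goodE.
Qed.

Definition psi z := [set i in A | odd (lab z %/ 2 ^ i)].

Lemma psi_diff x y : lab x < lab y -> goodh (hbf r (lab x) (lab y)) -> psi x != psi y.
Proof.
move=> lxy /existsP[i /andP[iA /eqP hi]].
have nxy : lab x != lab y by rewrite neq_ltn lxy.
have := hbf_bit (labr x) (labr y) nxy; rewrite -hi.
apply: contra => /eqP pe.
have : (i \in psi x) = (i \in psi y) by rewrite pe.
by rewrite !inE iA /= => ->.
Qed.

Lemma uniq_psi x p : path E x p -> all (fun w => w \notin S) p -> uniq (map psi (x :: p)).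
Proof.
elim: p x => [|z p IH] x //= /andP[Exz pz] /andP[zS aS].
rewrite /= in IH; rewrite IH // andbT.
apply/negP => /orP[/eqP e|/mapP[y yp e]].
  by move: (psi_diff (lab_lt Exz) (goodE Exz zS)); rewrite e eqxx.
have pz' : path E x (z :: p) by rewrite /= Exz.
have az' : all (fun w => w \notin S) (z :: p) by rewrite /= zS.
have yz : y \in z :: p by rewrite inE yp orbT.
have [l g] := path_good pz' az' yz.
by move: (psi_diff l g); rewrite e eqxx.
Qed.

Lemma depth_psi x p : path E x p -> all (fun w => w \notin S) (x :: p) ->
  size (x :: p) <= 2 ^ #|A|.
Proof.
move=> pth /andP[_ aS].
rewrite -(size_map psi) -card_powerset cardE.
apply: uniq_leq_size; first exact: uniq_psi.
move=> Y /mapP[z _ ->]; rewrite mem_enum powersetE.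
by apply/subsetP => i; rewrite inE => /andP[].
Qed.
End Depth.

Lemma card_sum (T : finType) (B : {set T}) : #|B| = \sum_(t : T) (t \in B : nat).
Proof. by rewrite -sum1_card big_mkcond /=; apply: eq_bigr => t _; case: (t \in B). Qed.

Lemma reduce_main Delta r' k : (forall v, #|parents E v| <= Delta) -> #|V| <= 2 ^ r'.+1 ->
  0 < k -> exists S : {set V}, (k * #|S| <= Delta * #|V|) /\ depth_minus_le E S (2 ^ (r'.+1 - r'.+1 %/ k)).
Proof.
move=> Hdeg Hn kpos.
set r := r'.+1.
have labr : forall v, lab v < 2 ^ r by move=> v; apply: leq_trans (lab_bound v) Hn.
pose Sc (c : 'I_k) := [set v | [exists u, E u v && (hbf r (lab u) (lab v) %% k == c)]].
have Hsum : \sum_(c < k) #|Sc c| <= Delta * #|V|.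
  under eq_bigr => c _ do rewrite card_sum.
  rewrite exchange_big /= mulnC; apply: (leq_trans (_ : _ <= \sum_(j : V) Delta)); last by rewrite sum_nat_const.
  apply: leq_sum => v _.
  rewrite (eq_bigr (fun c => (c \in [set c : 'I_k | v \in Sc c]) : nat)); last by move=> c _; rewrite inE.
  rewrite -card_sum.
  pose cls u : 'I_k := Ordinal (ltn_pmod (hbf r (lab u) (lab v)) kpos).
  apply: leq_trans (Hdeg v).
  apply: leq_trans (leq_imset_card cls (parents E v)).
  apply: subset_leq_card; apply/subsetP => c; rewrite !inE => /existsP[u /andP[Euv /eqP hc]].
  apply/imsetP; exists u; first by rewrite inE.
  by apply: val_inj; rewrite /= hc.
pose c0 : 'I_k := Ordinal kpos.
case: (arg_minnP (fun c : 'I_k => #|Sc c|) (isT : predT c0)) => c _ cmin.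
exists (Sc c); split.
  apply: leq_trans Hsum.
  rewrite -[X in X * _](card_ord k) -sum_nat_const.
  by apply: leq_sum => j _; apply: cmin.
pose A := [set i : 'I_r | i %% k != c].
have goodE : forall u v, E u v -> v \notin Sc c -> goodh A (hbf r (lab u) (lab v)).
  move=> u v Euv vS.
  have hne : hbf r (lab u) (lab v) %% k != c.
    apply: contra vS => /eqP hc; rewrite inE; apply/existsP; exists u; rewrite Euv /=.
    by apply/eqP.
  have hlt : hbf r (lab u) (lab v) < r.
    by apply: hbf_lt; rewrite ?labr // neq_ltn lab_lt.
  by apply/existsP; exists (Ordinal hlt); rewrite inE hne eqxx.
have cardA : #|A| <= r - r %/ k.
  pose T := [set i : 'I_r | i %% k == c].
  have AT : A = ~: T by apply/setP => i; rewrite !inE.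
  have HT : r %/ k <= #|T|.
    have bnd : forall q : 'I_(r %/ k), c + k * q < r.
      move=> q; have q1 : k * q.+1 <= k * (r %/ k) by rewrite leq_mul2l ltn_ord orbT.
      have := leq_trunc_div r k; rewrite mulnC => h.
      have := ltn_ord c; lia.
    pose f (q : 'I_(r %/ k)) : 'I_r := inord (c + k * q).
    have finj : injective f.
      move=> q1 q2 /(congr1 (@nat_of_ord _)); rewrite /f !inordK ?bnd // => h.
      apply: ord_inj; move: h; have := kpos; clear; nia.
    rewrite -{1}(card_ord (r %/ k)) -(card_imset _ finj).
    apply: subset_leq_card; apply/subsetP => i /imsetP[q _ ->].
    rewrite inE /f inordK ?bnd //.
    by rewrite addnC mulnC modnMDl modn_small.
  have := cardsC T; rewrite -AT card_ord; lia.
move=> x p pth all_p.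
apply: leq_trans (depth_psi labr goodE pth all_p) _.
by rewrite leq_pexp2l.
Qed.
End Graph.

Lemma pow_lin l : 3 <= l -> 2 * l + 2 <= 2 ^ l.
Proof.
elim: l => // l IH; rewrite leq_eqVlt => /orP[/eqP <- //|]; rewrite ltnS => /IH h.
rewrite expnS; lia.
Qed.

Lemma large_nat (V : finType) (E : rel V) Delta : dag E ->
  (forall v, #|parents E v| <= Delta) -> 3 <= #|V| ->
  4 <= trunc_log 2 (trunc_log 2 #|V|).+1 ->
  exists t PB PW, @bw_pebbling V E t PB PW /\
    bw_cost t PB PW * ((trunc_log 2 #|V|).+1) ^ 2 <=
      (4 * (2 * trunc_log 2 (trunc_log 2 #|V|).+1 + 2) ^ 2 * Delta ^ 2 + 2) * #|V| ^ 2.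
Proof.
move=> dagE Hdeg n3 l4.
set n := #|V|; set L := trunc_log 2 n; set r := L.+1; set l2 := trunc_log 2 r.
set j := 2 * l2 + 2; set k := r %/ j.
have n0 : 0 < n by lia.
have h2L : 2 ^ L <= n by apply: trunc_logP.
have hnr : n < 2 ^ r by apply: trunc_log_ltn.
have h2l : 2 ^ l2 <= r by apply: trunc_logP.
have hr : r < 2 ^ l2.+1 by apply: trunc_log_ltn.
have jr : j <= r .
  have h3 : 3 <= l2 by apply: ltnW l4.
  exact: leq_trans (pow_lin h3) h2l.
have j0 : 0 < j by lia.
have kpos : 0 < k by rewrite divn_gt0.
have [S [HS Hd]] := reduce_main dagE Hdeg (ltnW hnr) kpos.
have [t [PB [PW [Hp Hc]]]] := part1 (e := #|S|) (leqnn _) Hd.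
exists t, PB, PW; split => //.
set e := #|S| in HS Hc *; set d := 2 ^ (r - r %/ k) in Hc *.
set cost := bw_cost t PB PW in Hc *.
have jk : j <= r %/ k by rewrite leq_divRL // mulnC leq_trunc_div.
have rk : r %/ k <= r by apply: leq_div.
have dj : d * 2 ^ j <= 2 ^ r.
  apply: leq_trans (_ : d * 2 ^ (r %/ k) <= _).
    by rewrite leq_mul2l leq_pexp2l // orbT.
  by rewrite -expnD subnK.
have r2n : 2 ^ r <= 2 * n by rewrite expnS leq_mul2l h2L orbT.
have rj : r ^ 2 <= 2 ^ j.
  have : r * r <= 2 ^ l2.+1 * 2 ^ l2.+1 by apply: leq_mul; apply: ltnW.
  by rewrite -expnD (_ : l2.+1 + l2.+1 = j) ?mulnn //; lia.
have dr : d * r ^ 2 <= 2 * n.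
  apply: leq_trans (leq_trans dj r2n); by rewrite leq_mul2l rj orbT.
have rkj : r < k.+1 * j by apply: ltn_ceil.
have er : e * r <= 2 * j * (Delta * n).
  have h1 : e * r <= e * (k.+1 * j) by rewrite leq_mul2l ltnW ?rkj ?orbT.
  have h2 : e * (k.+1 * j) <= (2 * j) * (k * e).
    have : k.+1 <= 2 * k by lia.
    move=> h; nia.
  have h3 : (2 * j) * (k * e) <= 2 * j * (Delta * n) by rewrite leq_mul2l HS orbT.
  exact: leq_trans h1 (leq_trans h2 h3).
have ee : e * (e + 1) %/ 2 <= e * e.
  have : e * (e + 1) <= 2 * (e * e) by nia.
  set P := e * (e + 1); lia.
have Hc2 : cost <= e * e + d * n by apply: leq_trans Hc _; rewrite leq_add2r.
apply: leq_trans (_ : (e * e + d * n) * r ^ 2 <= _); first by rewrite leq_mul2r Hc2 orbT.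
set X := e * r; set Y := d * r ^ 2.
have -> : (e * e + d * n) * r ^ 2 = X * X + Y * n by rewrite /X /Y; nia.
have hX : X * X <= (2 * j * (Delta * n)) * (2 * j * (Delta * n)) by apply: leq_mul.
have hY : Y * n <= 2 * n * n by rewrite leq_mul2r dr orbT.
apply: leq_trans (leq_add hX hY) _.
rewrite (_ : (4 * j ^ 2 * Delta ^ 2 + 2) * n ^ 2 = 2 * j * (Delta * n) * (2 * j * (Delta * n)) + 2 * n * n) //.
nia.
Qed.

Lemma small_nat (V : finType) (E : rel V) :
  exists t PB PW, @bw_pebbling V E t PB PW /\ bw_cost t PB PW <= #|V| * #|V|.
Proof.
have Hd : depth_minus_le E [set: V] 0 by move=> x p _ /andP[]; rewrite inE.
have Se : #|[set: V]| <= #|V| by rewrite cardsT.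
have [t [PB [PW [Hp Hc]]]] := part1 Se Hd.
exists t, PB, PW; split => //; apply: leq_trans Hc _.
rewrite mul0n addn0; have : #|V| * (#|V| + 1) <= 2 * (#|V| * #|V|) by nia.
set P := #|V| * (#|V| + 1); lia.
Qed.

Section Reals.
Local Open Scope R_scope.

Lemma ln_le' x y : 0 < x -> x <= y -> ln x <= ln y.
Proof.
move=> hx hxy; case: (Rle_lt_or_eq_dec _ _ hxy) => h.
  by apply: Rlt_le; apply: ln_increasing.
by rewrite h; apply: Rle_refl.
Qed.

Lemma ln2_lt1 : ln 2 < 1.
Proof.
have h : 2 < exp 1 by have := exp_ineq1 1 ltac:(lra); lra.
rewrite -(ln_exp 1); apply: ln_increasing; lra.
Qed.

Lemma ln3_gt1 : 1 < ln 3.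
Proof.
have h1 : 7/8 < exp (-1/8) by have := exp_ineq1 (-1/8) ltac:(lra); lra.
have e2 : exp (-1/4) = exp (-1/8) * exp (-1/8) by rewrite -exp_plus; f_equal; lra.
have e4 : exp (-1/2) = exp (-1/4) * exp (-1/4) by rewrite -exp_plus; f_equal; lra.
have e8 : exp (-1) = exp (-1/2) * exp (-1/2) by rewrite -exp_plus; f_equal; lra.
have h2 : 49/64 < exp (-1/4) by rewrite e2; nra.
have h3 : 2401/4096 < exp (-1/2) by rewrite e4; nra.
have h4 : 1/3 < exp (-1) by rewrite e8; nra.
have h5 : exp 1 * exp (-1) = 1 by rewrite -exp_plus (_ : 1 + -1 = 0) ?exp_0 //; lra.
have h6 : exp 1 < 3 by have := exp_pos 1; nra.
rewrite -(ln_exp 1); apply: ln_increasing => //; apply: exp_pos.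
Qed.

Lemma INR_expn2 m : INR (2 ^ m) = 2 ^ m.
Proof.
elim: m => [|m IH] //=; rewrite expnS -multE mult_INR IH; simpl; lra.
Qed.

Lemma ln_lt_id x : 0 < x -> ln x < x.
Proof.
move=> hx; have := exp_ineq1_le (ln x); rewrite exp_ln //; lra.
Qed.

Lemma natRmul a b : INR (a * b)%N = INR a * INR b.
Proof. by rewrite -multE mult_INR. Qed.
Lemma natRadd a b : INR (a + b)%N = INR a + INR b.
Proof. by rewrite -plusE plus_INR. Qed.
Lemma natRexp a m : INR (a ^ m)%N = INR a ^ m.
Proof. by elim: m => [|m IH] //=; rewrite expnS natRmul IH. Qed.
Lemma natRle a b : (a <= b)%N -> INR a <= INR b.
Proof. by move/leP; apply: le_INR. Qed.

Lemma conv_ineq c r l D n : (c * r ^ 2 <= (4 * (2 * l + 2) ^ 2 * D ^ 2 + 2) * n ^ 2)%N ->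
  INR c * INR r ^ 2 <= (4 * (2 * INR l + 2) ^ 2 * INR D ^ 2 + 2) * INR n ^ 2.
Proof.
move/natRle.
rewrite (natRmul c (r ^ 2)) (natRexp r 2) (natRmul _ (n ^ 2)) (natRexp n 2) (natRadd _ 2).
rewrite (natRmul _ (D ^ 2)) (natRexp D 2) (natRmul 4) (natRexp _ 2) (natRadd (2 * l) 2).
rewrite (natRmul 2 l).
have i4 : INR 4 = 4 by rewrite /=; lra.
have i2 : INR 2 = 2 by rewrite /=; lra.
by rewrite i4 i2.
Qed.

Lemma real_large (cost r N LL Ln J D : R) : 0 < Ln -> Ln <= r -> 0 <= cost ->
  cost * r ^ 2 <= (4 * J ^ 2 * D ^ 2 + 2) * N ^ 2 -> 0 <= J -> J <= 12 * LL ->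
  1 <= LL -> cost <= (576 * D ^ 2 + 2) * (N * LL / Ln) ^ 2.
Proof.
move=> Ln0 Lnr c0 H J0 JL LL1.
have h1 : cost * Ln ^ 2 <= cost * r ^ 2.
  apply: Rmult_le_compat_l => //; apply: pow_incr; lra.
have h2 : J ^ 2 <= 144 * LL ^ 2 by nra.
have h3 : (4 * J ^ 2 * D ^ 2 + 2) * N ^ 2 <= (576 * D ^ 2 + 2) * (LL ^ 2 * N ^ 2).
  have hN : 0 <= N ^ 2 by nra.
  have hD : 0 <= D ^ 2 by nra.
  have : 4 * J ^ 2 * D ^ 2 + 2 <= (576 * D ^ 2 + 2) * LL ^ 2 by nra.
  nra.
have e : (N * LL / Ln) ^ 2 * Ln ^ 2 = LL ^ 2 * N ^ 2 by field; lra.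
apply: (Rmult_le_reg_r (Ln ^ 2)); first by nra.
rewrite Rmult_assoc e; lra.
Qed.
End Reals.

Section Part2.
Local Open Scope R_scope.

Lemma part2 Delta : exists C : R, forall (V : finType) (E : rel V),
  dag E -> (3 <= #|V|)%N -> (forall v : V, (#|parents E v| <= Delta)%N) ->
  ccBW_leR E (C * (INR #|V| * ln (ln (INR #|V|)) / ln (INR #|V|)) ^ 2).
Proof.
exists (576 * INR Delta ^ 2 + 2 + 2 ^ 32 / (ln (ln 3)) ^ 2).
move=> V E dagE n3 Hdeg.
set n := #|V|; set N := INR n.
have N3 : 3 <= N.
  have := natRle n3; rewrite /N (_ : INR 3 = 3) //; rewrite /=; lra.
have l3 := ln3_gt1.
have Ln3 : ln 3 <= ln N by apply: ln_le'; lra.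
have Ln0 : 0 < ln N by lra.
have ll3 : 0 < ln (ln 3) by rewrite -ln_1; apply: ln_increasing; lra.
have LL3 : ln (ln 3) <= ln (ln N) by apply: ln_le'; lra.
set Ln := ln N in Ln3 Ln0 LL3 *; set LL := ln Ln in LL3 *.
set X := N * LL / Ln.
have XLL : LL <= X.
  rewrite /X /Rdiv Rmult_assoc (Rmult_comm LL) -Rmult_assoc.
  have : 1 <= N * / Ln.
    have h : Ln < N by rewrite /Ln; apply: ln_lt_id; lra.
    apply: (Rmult_le_reg_r Ln) => //; rewrite Rmult_assoc Rinv_l; lra.
  nra.
have M0 : 0 <= 2 ^ 32 / (ln (ln 3)) ^ 2.
  apply: Rmult_le_pos; first by lra.
  by apply: Rlt_le; apply: Rinv_0_lt_compat; nra.
have D0 : 0 <= INR Delta by apply: pos_INR.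
case: (leqP 4 (trunc_log 2 (trunc_log 2 n).+1)) => hl.
  have [t [PB [PW [Hp Hc]]]] := large_nat dagE Hdeg n3 hl.
  exists t, PB, PW; split => //.
  apply: Rle_trans (_ : (576 * INR Delta ^ 2 + 2) * X ^ 2 <= _); last first.
    by apply: Rmult_le_compat_r; nra.
  move: hl Hc; set L := trunc_log 2 n; set r := L.+1; set l2 := trunc_log 2 r => hl Hc.
  have H := conv_ineq Hc; rewrite -/n -/N in H.
  have i2 : INR 2 = 2 by rewrite /=; lra.
  have hn : (n < 2 ^ r)%N by apply: trunc_log_ltn.
  have h2L : (2 ^ L <= n)%N by apply: trunc_logP; lia.
  have h2l : (2 ^ l2 <= r)%N by apply: trunc_logP.
  set m := (l2 - 2)%N.
  have l2m : l2 = (m + 2)%N by rewrite /m; lia.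
  have m2 : (2 <= m)%N by rewrite /m; lia.
  have Lm : (2 * 2 ^ m <= L)%N.
    move: h2l; rewrite l2m expnD (_ : (2 ^ 2 = 4)%N) //.
    have : (0 < 2 ^ m)%N by rewrite expn_gt0.
    set a := (2 ^ m)%N; rewrite /r; lia.
  have Lnr : Ln <= INR r.
    have h1 : N < 2 ^ r by rewrite -INR_expn2; apply: lt_INR; apply/ltP.
    have h2 : Ln <= ln (2 ^ r) by apply: ln_le'; lra.
    rewrite ln_pow in h2; last lra.
    have := ln2_lt1; have := pos_INR r; have := ln_lt_2; nra.
  have Lnm : 2 ^ m <= Ln.
    have h1 : 2 ^ L <= N by rewrite -INR_expn2; apply: natRle.
    have h2 : ln (2 ^ L) <= Ln by apply: ln_le' => //; apply: pow_lt; lra.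
    rewrite ln_pow in h2; last lra.
    have h3 := natRle Lm; rewrite natRmul natRexp i2 in h3.
    have := ln_lt_2; have := pos_INR L; nra.
  have LLm : INR m / 2 <= LL.
    have h2 : ln (2 ^ m) <= LL by apply: ln_le' => //; apply: pow_lt; lra.
    rewrite ln_pow in h2; last lra.
    have := ln_lt_2; have := pos_INR m; nra.
  have im2 : 2 <= INR m by have := natRle m2; rewrite i2.
  have il2 : INR l2 = INR m + 2 by rewrite l2m natRadd i2.
  rewrite il2 in H.
  apply: (real_large (r := INR r) (J := 2 * (INR m + 2) + 2)) => //.
  - by apply: pos_INR.
  - lra.
  - lra.
  - lra.
have [t [PB [PW [Hp Hc]]]] := small_nat E.
exists t, PB, PW; split => //.
have hr15 : ((trunc_log 2 n).+1 <= 15)%N.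
  have := trunc_log_ltn (trunc_log 2 n).+1 (isT : (1 < 2)%N) => h.
  have : (2 ^ (trunc_log 2 (trunc_log 2 n).+1).+1 <= 2 ^ 4)%N by rewrite leq_pexp2l.
  move: h; set a := (2 ^ _)%N; move=> h1 h2; have : (2 ^ 4 = 16)%N by []; lia.
have hn : (n < 2 ^ (trunc_log 2 n).+1)%N by apply: trunc_log_ltn.
have NR : N < 2 ^ 15.
  apply: Rlt_le_trans (_ : INR (2 ^ (trunc_log 2 n).+1) <= _).
    by apply: lt_INR; apply/ltP.
  rewrite INR_expn2; apply: Rle_pow; first lra.
  by apply/leP.
have Hc' : INR (bw_cost t PB PW) <= N * N by rewrite /N -natRmul; apply: natRle.
have XL : ln (ln 3) ^ 2 <= X ^ 2 by apply: pow_incr; lra.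
have e32 : 2 ^ 32 / ln (ln 3) ^ 2 * ln (ln 3) ^ 2 = 2 ^ 32 by field; lra.
have : 2 ^ 32 <= 2 ^ 32 / ln (ln 3) ^ 2 * X ^ 2.
  rewrite -{1}e32; apply: Rmult_le_compat_l => //.
have : (2:R) ^ 32 = 2 ^ 15 * 2 ^ 15 * 4 by rewrite -!pow_add; simpl; lra.
have X0 : 0 <= X ^ 2 by nra.
have : 0 <= N by lra.
nra.
Qed.
End Part2.

Theorem mainTheorem14 :
  (forall (V : finType) (E : rel V) (e d : nat),
      dag E -> reducible E e d ->
      ccBW_le E ((e * (e + 1)) %/ 2 + d * #|V|)) /\
  (forall Delta : nat, exists C : R,
      forall (V : finType) (E : rel V),
        dag E -> 3 <= #|V| -> (forall v : V, #|parents E v| <= Delta) ->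
        ccBW_leR E
          (Rmult C (pow (Rdiv (Rmult (INR #|V|) (ln (ln (INR #|V|)))) (ln (INR #|V|))) 2))).
Proof.
split.
  move=> V E e d _ H; case: H => S [Se Hd]; exact: (part1 Se Hd).
exact: part2.
Qed.
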